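(* If $G = K_4$ or $G$ is a diamond-necklace $N_k$ for some $k \ge 2$, then $\sigma_{(2,2)}(G) = \sigma_{(2,3)}(G)$.
   Context: A diamond is a graph isomorphic to $K_4$ minus one edge. Diamond-necklace: for $k\ge 2$, take $k$ disjoint diamonds $D_1,\dots,D_k$ with $V(D_i)=\{a_i,b_i,c_i,d_i\}$ where $a_ib_i$ is the missing edge, and add the edges $a_ib_{i+1}$ for $i\in\{1,\dots,k-1\}$ and the edge $a_kb_1$; the result is $N_k$. $(p,q)$-spreading: let $p\in\mathbb{N}$ and $q\in\mathbb{N}\cup\{\infty\}$. Start with a set $S\subseteq V(G)$ of blue vertices, all other vertices white. The color change rule: if a white vertex $w$ has at least $p$ blue neighbors, and at least one of the blue neighbors of $w$ has at most $q$ white neighbors, then $w$ is recolored blue. $S$ is a $(p,q)$-spreading set if repeatedly applying this rule eventually colors all vertices blue. $\sigma_{(p,q)}(G)$ is the minimum cardinality of a $(p,q)$-spreading set of $G$. *)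

(* Defs.v *)
From mathcomp Require Import all_boot.
From mathcomp Require Import boolp.
Set Implicit Arguments. Unset Strict Implicit. Unset Printing Implicit Defensive.

Definition simple_graph (T : finType) (e : rel T) : Prop := symmetric e /\ irreflexive e.

Section Spreading.
Variables (T : finType) (e : rel T) (p q : nat).

Definition pq_step (B : {set T}) : {set T} :=
  B :|: [set w | (w \notin B)
                 && (p <= #|[set u in B | e w u]|)
                 && [exists u in B, e w u && (#|[set x | e u x & x \notin B]| <= q)]].

Definition pq_spreading (S : {set T}) : Prop :=
  exists n, iter n pq_step S = [set: T].

End Spreading.

(* sigma_(p,q)(G): minimum cardinality of a (p,q)-spreading set.  The set of all
   vertices is always spreading (n = 0), so #|T| is a harmless default for minn. *)
Definition sigma_pq (T : finType) (e : rel T) (p q : nat) : nat :=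
  \big[minn/#|T|]_(S : {set T} | `[< pq_spreading e p q S >]) #|S|.

Definition K4_rel : rel 'I_4 := fun x y => x != y.

(* Diamond-necklace N_k on vertex set 'I_k * 'I_4: vertex (i, t) is a_i, b_i, c_i, d_i
   for t = 0, 1, 2, 3.  Diamond D_i = K_4 on {a_i,b_i,c_i,d_i} minus a_i b_i;
   plus edges a_i b_(i+1) (indices mod k, giving a_(k) b_1 in 1-based notation). *)
Definition necklace_rel (k : nat) : rel ('I_k * 'I_4) := fun x y =>
  let: (i, s) := x in let: (j, t) := y in
  [|| (i == j) && (s != t) && ~~ ((val s <= 1) && (val t <= 1)),
      (val s == 0) && (val t == 1) && (val j == (val i).+1 %% k)
    | (val s == 1) && (val t == 0) && (val i == (val j).+1 %% k)].
Arguments necklace_rel k : clear implicits.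

Lemma K4_simple : simple_graph K4_rel.
Proof. by split=> [x y|x]; rewrite /K4_rel ?eq_refl // eq_sym. Qed.

(* Main.v *)
Require Import Defs.
From mathcomp Require Import all_boot.
From mathcomp Require Import boolp zify.
Set Implicit Arguments. Unset Strict Implicit. Unset Printing Implicit Defensive.

Section Gen.
Variables (T : finType) (e : rel T).
Hypothesis esym : symmetric e.
Hypothesis eirr : irreflexive e.
Hypothesis deg3 : forall v, #|[set u | e v u]| <= 3.

Definition white (B : {set T}) v : {set T} := [set u | e v u & u \notin B].
Definition Psi (B : {set T}) := \sum_(v in B) (1 + #|white B v|).

Lemma sum_e (X : {set T}) w : \sum_(v in X) (e v w : nat) = #|[set u in X | e w u]|.
Proof.
rewrite -sum1_card [RHS](eq_bigl (fun i => (i \in X) && e w i)); last by move=> i; rewrite !inE.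
rewrite [RHS]big_mkcondr /=.
by apply: eq_bigr => v _; rewrite esym; case: (e w v).
Qed.

Lemma Psi_add (X : {set T}) w : w \notin X ->
  Psi (w |: X) + 2 * #|[set u in X | e w u]| = Psi X + 1 + #|[set u | e w u]|.
Proof.
move=> wX; rewrite /Psi big_setU1 //=.
have H1 : forall v, v \in X -> 1 + #|white X v| = (e v w : nat) + (1 + #|white (w |: X) v|).
  move=> v vX; rewrite (cardsD1 w (white X v)) !inE (negbTE wX) andbT.
  have -> : white X v :\ w = white (w |: X) v.
    by apply/setP => u; rewrite /white !inE negb_or; case: (u == w); case: (e v u).
  lia.
rewrite (eq_bigr _ H1) [in RHS]big_split /= sum_e.
have H2 : #|white (w |: X) w| + #|[set u in X | e w u]| = #|[set u | e w u]|.
  rewrite -(cardsID X [set u | e w u]) addnC; congr (_ + _).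
    by apply: eq_card => u; rewrite !inE andbC.
  apply/eq_card => u; rewrite !inE negb_or.
  case ewu: (e w u); rewrite ?andbF //= andbT.
  by case: eqP => // uw; move: ewu; rewrite uw eirr.
lia.
Qed.

Lemma Psi_addM (B M : {set T}) : (forall w, w \in M -> (w \notin B) && (2 <= #|[set u in B | e w u]|)) ->
  Psi (B :|: M) <= Psi B.
Proof.
have [n] := ubnP #|M|; elim: n M => // n IH M; rewrite ltnS => leM HM.
case: (set_0Vmem M) => [->|[w wM]]; first by rewrite setU0.
have HM' : forall x, x \in M :\ w -> (x \notin B) && (2 <= #|[set u in B | e x u]|).
  by move=> x; rewrite inE => /andP[_]; apply: HM.
have IH' := IH (M :\ w) _ HM'.
rewrite -(setD1K wM) setUCA.
have wX : w \notin B :|: M :\ w by rewrite !inE eqxx /= ?orbF; case/andP: (HM w wM).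
have := Psi_add wX.
have : 2 <= #|[set u in B :|: M :\ w | e w u]|.
  case/andP: (HM w wM) => _ H; apply: (leq_trans H); apply: subset_leq_card.
  by apply/subsetP => u; rewrite !inE => /andP[-> ->].
have := deg3 w.
have : Psi (B :|: M :\ w) <= Psi B.
  apply: IH'; move: leM; rewrite (cardsD1 w M) wM; lia.
lia.
Qed.

Lemma Psi_addT (B M : {set T}) : (forall w, w \in M -> (w \notin B) && (2 <= #|[set u in B | e w u]|)) ->
  B != setT -> B :|: M = setT -> Psi setT < Psi B.
Proof.
move=> HM BT BMT.
case: (set_0Vmem M) => [M0|[w wM]]; first by move: BT; rewrite -BMT M0 setU0 eqxx.
have HM' : forall x, x \in M :\ w -> (x \notin B) && (2 <= #|[set u in B | e x u]|).
  by move=> x; rewrite inE => /andP[_]; apply: HM.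
have IH' := Psi_addM HM'.
have wX : w \notin B :|: M :\ w by rewrite !inE eqxx /= ?orbF; case/andP: (HM w wM).
have := Psi_add wX.
have E : w |: (B :|: M :\ w) = setT by rewrite setUCA setD1K.
rewrite E.
have : 2 <= #|[set u in B :|: M :\ w | e w u]|.
  case/andP: (HM w wM) => _ H; apply: (leq_trans H); apply: subset_leq_card.
  by apply/subsetP => u; rewrite !inE => /andP[-> ->].
have -> : [set u in B :|: M :\ w | e w u] = [set u | e w u].
  apply/setP => u; rewrite !inE; case ewu: (e w u); rewrite ?andbF ?andbT //.
  have : u \in w |: (B :|: M :\ w) by rewrite E inE.
  rewrite !inE; case: eqP => [uw|] //=; by move: ewu; rewrite uw eirr.
lia.
Qed.

Lemma step_decomp q (B : {set T}) : exists M, pq_step e 2 q B = B :|: M /\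
  (forall w, w \in M -> (w \notin B) && (2 <= #|[set u in B | e w u]|)).
Proof.
eexists; split; first reflexivity.
by move=> w; rewrite inE => /andP[/andP[-> ->] _].
Qed.

Lemma Psi_iter q (S : {set T}) n : Psi (iter n (pq_step e 2 q) S) <= Psi S.
Proof.
elim: n => //= n IH; apply: leq_trans IH.
have [M [-> HM]] := step_decomp q (iter n (pq_step e 2 q) S).
exact: Psi_addM.
Qed.

Lemma PsiT : Psi setT = #|T|.
Proof.
rewrite /Psi -cardsT -sum1_card; apply: eq_bigr => v _.
suff -> : white setT v = set0 by rewrite cards0.
by apply/setP => u; rewrite !inE andbF.
Qed.

Lemma Psi_le (S : {set T}) : Psi S <= 4 * #|S|.
Proof.
rewrite /Psi mulnC -sum_nat_const; apply: leq_sum => v _.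
have : #|white S v| <= 3.
  apply: leq_trans (deg3 v); apply: subset_leq_card.
  by apply/subsetP => u; rewrite !inE => /andP[->].
lia.
Qed.

Lemma lower_gen q (S : {set T}) : pq_spreading e 2 q S -> 0 < #|T| -> #|T| < 4 * #|S|.
Proof.
move=> [n Hn] T0.
case: (S =P setT) => [->|ST].
  rewrite cardsT; lia.
suff : Psi setT < Psi S by rewrite PsiT => H; apply: leq_trans H (Psi_le S).
elim: n Hn => [/= //|n IH Hn].
case: (iter n (pq_step e 2 q) S =P setT) => [H|H]; first exact: IH.
apply: (leq_trans _ (Psi_iter q S n)).
have [M [E HM]] := step_decomp q (iter n (pq_step e 2 q) S).
apply: (Psi_addT HM); first by apply/eqP.
by rewrite -E.
Qed.

Definition reach q (S B : {set T}) := exists n, B \subset iter n (pq_step e 2 q) S.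

Lemma reach0 q (S : {set T}) : reach q S S.
Proof. by exists 0. Qed.

Lemma reach_add q (S B : {set T}) w y1 y2 z : 2 <= q -> reach q S B -> w \notin B ->
  y1 \in B -> y2 \in B -> y1 != y2 -> e w y1 -> e w y2 -> z \in B -> e y1 z ->
  reach q S (w |: B).
Proof.
move=> q2 [n Hn] wB y1B y2B y12 e1 e2 zB ez.
exists n.+1; rewrite iterS; set X := iter n _ S in Hn *.
rewrite subUset; apply/andP; split; last first.
  by apply: subset_trans Hn _; rewrite /pq_step subsetUl.
rewrite sub1set /pq_step in_setU; case wX: (w \in X) => //=.
have y1X : y1 \in X by apply: (subsetP Hn).
have y2X : y2 \in X by apply: (subsetP Hn).
have zX : z \in X by apply: (subsetP Hn).
rewrite inE wX /=; apply/andP; split.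
  apply: (@leq_trans #|[set y1; y2]|); first by rewrite cards2 y12.
  by apply: subset_leq_card; apply/subsetP => u; rewrite !inE => /orP[]/eqP->; rewrite ?y1X ?y2X.
apply/existsP; exists y1; rewrite y1X e1 /=.
have : #|[set x | e y1 x & x \notin X]| <= #|[set u | e y1 u] :\ z|.
  apply: subset_leq_card; apply/subsetP => u; rewrite !inE => /andP[-> uX]; rewrite andbT.
  by apply/eqP => uz; move: uX; rewrite uz zX.
have := deg3 y1; rewrite (cardsD1 z [set u | e y1 u]) inE ez. lia.
Qed.

Lemma reach_sub q (S B B' : {set T}) : reach q S B -> B' \subset B -> reach q S B'.
Proof. by move=> [n Hn] H; exists n; apply: subset_trans H Hn. Qed.

Lemma reachT q (S : {set T}) : reach q S setT -> pq_spreading e 2 q S.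
Proof. by move=> [n Hn]; exists n; apply/eqP; rewrite eqEsubset subsetT. Qed.

Lemma sigma_ge q m : m <= #|T| -> (forall S, pq_spreading e 2 q S -> m <= #|S|) ->
  m <= sigma_pq e 2 q.
Proof.
move=> mT H; rewrite /sigma_pq; elim/big_ind: _ => //.
  by move=> x y; rewrite leq_min => -> ->.
by move=> S /asboolP; apply: H.
Qed.

Lemma bigmin_le_seq (I : eqType) (r : seq I) (P : pred I) (F : I -> nat) x0 j :
  j \in r -> P j -> \big[minn/x0]_(i <- r | P i) F i <= F j.
Proof.
elim: r => // a r IH; rewrite inE big_cons => /orP[/eqP <-|jr] Pj.
  by rewrite Pj geq_minl.
case: (P a); last exact: IH.
by apply: leq_trans (geq_minr _ _) (IH jr Pj).
Qed.

Lemma sigma_le q (S : {set T}) : pq_spreading e 2 q S -> sigma_pq e 2 q <= #|S|.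
Proof.
move=> H; rewrite /sigma_pq; apply: bigmin_le_seq; first exact: mem_index_enum.
by apply/asboolP.
Qed.

End Gen.

Definition o0 : 'I_4 := @Ordinal 4 0 isT.
Definition o1 : 'I_4 := @Ordinal 4 1 isT.
Definition o2 : 'I_4 := @Ordinal 4 2 isT.
Definition o3 : 'I_4 := @Ordinal 4 3 isT.

Lemma K4_deg v : #|[set u | K4_rel v u]| <= 3.
Proof.
have -> : #|[set u | K4_rel v u]| = #|[set~ v]|.
  by apply: eq_card => u; rewrite !inE /K4_rel eq_sym.
by rewrite cardsC1 card_ord.
Qed.

Lemma K4_sym : symmetric K4_rel. Proof. by case: K4_simple. Qed.
Lemma K4_irr : irreflexive K4_rel. Proof. by case: K4_simple. Qed.

Lemma K4_sigma q : 2 <= q -> sigma_pq K4_rel 2 q = 2.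
Proof.
move=> q2; apply/eqP; rewrite eqn_leq; apply/andP; split.
  apply: (@leq_trans #|[set o0; o1]|); last by rewrite cards2.
  apply: sigma_le; apply: reachT.
  apply: (@reach_sub _ _ _ _ (o3 |: (o2 |: [set o0; o1]))); last first.
    by apply/subsetP => -[[|[|[|[|]]]] ?] //= _; rewrite !inE.
  apply: (@reach_add _ _ K4_deg q _ _ _ o0 o1 o1) => //.
    apply: (@reach_add _ _ K4_deg q _ _ _ o0 o1 o1) => //.
      exact: reach0.
    all: try by rewrite !inE.
apply: sigma_ge; first by rewrite card_ord.
move=> S HS; have := lower_gen K4_sym K4_irr K4_deg HS.
rewrite card_ord => /(_ isT); lia.
Qed.

Lemma oE01 : (o0 == o1) = false. Proof. by []. Qed.
Lemma oE02 : (o0 == o2) = false. Proof. by []. Qed.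
Lemma oE03 : (o0 == o3) = false. Proof. by []. Qed.
Lemma oE10 : (o1 == o0) = false. Proof. by []. Qed.
Lemma oE12 : (o1 == o2) = false. Proof. by []. Qed.
Lemma oE13 : (o1 == o3) = false. Proof. by []. Qed.
Lemma oE20 : (o2 == o0) = false. Proof. by []. Qed.
Lemma oE21 : (o2 == o1) = false. Proof. by []. Qed.
Lemma oE23 : (o2 == o3) = false. Proof. by []. Qed.
Lemma oE30 : (o3 == o0) = false. Proof. by []. Qed.
Lemma oE31 : (o3 == o1) = false. Proof. by []. Qed.
Lemma oE32 : (o3 == o2) = false. Proof. by []. Qed.

Section Nk.
Variable k : nat.
Notation V := ('I_k * 'I_4)%type.
Notation e := (necklace_rel k).

Lemma card3 (a b c : V) : #|[set a; b; c]| <= 3.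
Proof. by rewrite -setUA !cardsU1 cards1; case: (a \notin _); case: (b \notin _). Qed.

Lemma nk_eq (i j : 'I_k) (s t : 'I_4) : e (i, s) (j, t) =
  [|| (i == j) && (val s != val t) && ~~((val s <= 1) && (val t <= 1)),
      (val s == 0) && (val t == 1) && (j == ordS i)
    | (val s == 1) && (val t == 0) && (i == ordS j)].
Proof. by rewrite /necklace_rel -!val_eqE. Qed.

Lemma nk_deg v : #|[set u | e v u]| <= 3.
Proof.
case: v => i [[|[|[|[|t]]]] Ht] //.
- apply: leq_trans (card3 (i, o2) (i, o3) (ordS i, o1)).
  apply: subset_leq_card; apply/subsetP => -[j [[|[|[|[|s]]]] Hs]] //;
  rewrite !inE nk_eq /= ?andbF ?andbT ?orbF //=;
  by move/eqP=> ->; rewrite !xpair_eqE -!val_eqE /= !eqxx ?orbT ?andbT.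
- apply: leq_trans (card3 (i, o2) (i, o3) (ord_pred i, o0)).
  apply: subset_leq_card; apply/subsetP => -[j [[|[|[|[|s]]]] Hs]] //;
  rewrite !inE nk_eq /= ?andbF ?andbT ?orbF //=;
  by move/eqP=> ->; rewrite ?ordSK !xpair_eqE -!val_eqE /= !eqxx ?orbT ?andbT.
- apply: leq_trans (card3 (i, o0) (i, o1) (i, o3)).
  apply: subset_leq_card; apply/subsetP => -[j [[|[|[|[|s]]]] Hs]] //;
  rewrite !inE nk_eq /= ?andbF ?andbT ?orbF //=;
  by move/eqP=> ->; rewrite !xpair_eqE -!val_eqE /= !eqxx ?orbT ?andbT.
- apply: leq_trans (card3 (i, o0) (i, o1) (i, o2)).
  apply: subset_leq_card; apply/subsetP => -[j [[|[|[|[|s]]]] Hs]] //;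
  rewrite !inE nk_eq /= ?andbF ?andbT ?orbF //=;
  by move/eqP=> ->; rewrite !xpair_eqE -!val_eqE /= !eqxx ?orbT ?andbT.
Qed.


Lemma nk_sym : symmetric (necklace_rel k).
Proof.
move=> [i [[|[|[|[|s]]]] Hs]] [j [[|[|[|[|t]]]] Ht]] //; rewrite !nk_eq /= ?(eq_sym i) //.
all: by rewrite ?andbF ?orbF.
Qed.

Lemma nk_irr : irreflexive (necklace_rel k).
Proof. by move=> [i [[|[|[|[|s]]]] Hs]] //; rewrite nk_eq /= ?eqxx ?andbF. Qed.

Definition S0 : {set V} := [set x : V | (val x.2 == 2) || ((val x.1 == 0) && (val x.2 == 0))].
Definition Bi (i : nat) : {set V} := S0 :|: [set x : V | val x.1 < i].

Section Chain.
Variables (q : nat) (q2 : 2 <= q).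

Lemma chain_base (k0 : 0 < k) : reach e q S0 (Bi 1).
Proof.
pose i0 : 'I_k := Ordinal k0.
apply: (@reach_sub _ _ _ _ ((i0, o1) |: ((i0, o3) |: S0))); last first.
  apply/subsetP => -[j s]; rewrite !inE /= => H.
  have [j0|jn0] := eqVneq (val j) 0.
    have -> : j = i0 by apply: val_inj.
    by case: s {H} => [[|[|[|[|s]]]] Hs] //=; rewrite !xpair_eqE -!val_eqE /= ?eqxx ?orbT.
  move: H; rewrite (negbTE jn0) /= ltnS leqn0 (negbTE jn0) orbF => ->; by rewrite !orbT.
apply: (@reach_add _ _ nk_deg q _ _ _ (i0, o2) (i0, o3) (i0, o0)) => //.
- apply: (@reach_add _ _ nk_deg q _ _ _ (i0, o2) (i0, o0) (i0, o0)) => //.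
  + exact: reach0.
  all: try by rewrite !inE /= ?eqxx.
  all: try by rewrite nk_eq /= ?eqxx.
all: try by rewrite !inE /= ?eqxx ?orbT.
all: try by rewrite nk_eq /= ?eqxx.
Qed.

Lemma chain_step i (ik : i < k) (i1 : 0 < i) :
  reach e q S0 (Bi i) -> reach e q S0 (Bi i.+1).
Proof.
move=> R.
pose ii : 'I_k := Ordinal ik.
pose ip : 'I_k := Ordinal (leq_ltn_trans (leq_pred i) ik).
have Sip : ii = ordS ip.
  by apply: val_inj => /=; rewrite prednK // modn_small.
apply: (@reach_sub _ _ _ _ ((ii, o0) |: ((ii, o3) |: ((ii, o1) |: Bi i)))); last first.
  apply/subsetP => -[j s]; rewrite /Bi !inE /= => H.
  have [ji|jni] := eqVneq (val j) i.
    have -> : j = ii by apply: val_inj.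
    by case: s {H} => [[|[|[|[|s]]]] Hs] //=; rewrite !xpair_eqE -!val_eqE /= ?eqxx ?orbT.
  move: H; rewrite ltnS leq_eqVlt (negbTE jni) /= => ->; by rewrite !orbT.
apply: (@reach_add _ _ nk_deg q _ _ _ (ii, o2) (ii, o3) (ii, o3)) => //.
- apply: (@reach_add _ _ nk_deg q _ _ _ (ii, o2) (ii, o1) (ii, o1)) => //.
  + apply: (@reach_add _ _ nk_deg q _ _ _ (ip, o0) (ii, o2) (ip, o2)) => //.
all: try by rewrite nk_eq /= -?Sip ?eqxx ?orbT.
all: try by rewrite /Bi !inE ?xpair_eqE -?val_eqE /= ?ltnn ?eqxx ?orbT ?andbF ?ltn_predL ?i1.
all: rewrite /Bi ?inE ?xpair_eqE /= ?oE01 ?oE02 ?oE03 ?oE10 ?oE12 ?oE13 ?oE20 ?oE21 ?oE23 ?oE30 ?oE31 ?oE32 ?andbF ?ltnn ?ltn_predL ?i1 ?orbT //= ?(negbTE (lt0n_neq0 i1)).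
all: by [].
Qed.

Lemma chain_all i : 0 < i <= k -> reach e q S0 (Bi i).
Proof.
elim: i => // i IH /andP[_ ik].
case: i IH ik => [_ ik|i IH ik]; first exact: chain_base.
apply: chain_step => //; apply: IH; rewrite /= ltnW //.
Qed.

Lemma S0_spread (k0 : 0 < k) : pq_spreading e 2 q S0.
Proof.
apply: reachT; apply: (@reach_sub _ _ _ _ (Bi k)); first by apply: chain_all; rewrite k0 leqnn.
by apply/subsetP => -[j s] _; rewrite /Bi !inE /= ltn_ord orbT.
Qed.

End Chain.

Lemma S0_card (k0 : 0 < k) : #|S0| <= k.+1.
Proof.
pose i0 : 'I_k := Ordinal k0.
apply: (@leq_trans #|(i0, o0) |: ((fun x : 'I_k => (x, o2)) @: [set: 'I_k])|).
  apply: subset_leq_card; apply/subsetP => -[j [[|[|[|[|s]]]] Hs]] //; rewrite !inE /=.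
  - rewrite andbT => /eqP j0; apply/orP; left; rewrite xpair_eqE.
    by apply/andP; split; apply/eqP; apply: val_inj.
  - by rewrite andbF.
  - move=> _; apply/orP; right; apply/imsetP; exists j => //.
    - by rewrite inE.
    by apply/eqP; rewrite xpair_eqE eqxx /=; apply/eqP; apply: val_inj.
  - by rewrite andbF.
rewrite cardsU1 -[k.+1]add1n; apply: leq_add; first by case: (_ \notin _).
by apply: leq_trans (leq_imset_card _ _) _; rewrite cardsT card_ord.
Qed.

Lemma nk_sigma q (k2 : 1 < k) (q2 : 1 < q) : sigma_pq e 2 q = k.+1.
Proof.
have k0 : 0 < k by apply: ltnW.
apply/eqP; rewrite eqn_leq; apply/andP; split.
  apply: leq_trans (sigma_le (S0_spread q2 k0)) (S0_card k0).
apply: sigma_ge; first by rewrite card_prod !card_ord; lia.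
move=> S HS; have := lower_gen nk_sym nk_irr nk_deg HS.
rewrite card_prod !card_ord => H; have := H ltac:(lia); lia.
Qed.
End Nk.

Theorem proposition4p6 :
  sigma_pq K4_rel 2 2 = sigma_pq K4_rel 2 3 /\
  (forall k : nat, 2 <= k ->
     sigma_pq (necklace_rel k) 2 2 = sigma_pq (necklace_rel k) 2 3).
Proof.
split; first by rewrite (K4_sigma (q:=2)) // (K4_sigma (q:=3)).
by move=> k k2; rewrite (nk_sigma (k:=k) (q:=2)) // (nk_sigma (k:=k) (q:=3)).
Qed.
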